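(* Let $G_1$ be a $(q_1,q_2)$-semi-regular bipartite graph with bipartition $V_1,V_2$, $|V_1|=n_1\le n_2=|V_2|$, and put $\nu_1=n_1+n_2$, $\epsilon_1=n_1q_1=n_2q_2$. Let $G_2$ be a $(q_3,q_4)$-semi-regular bipartite graph with bipartition $V_3,V_4$, $|V_3|=n_3\le n_4=|V_4|$, and put $\nu_2=n_3+n_4$, $\epsilon_2=n_3q_3=n_4q_4$. Write the adjacency spectra as multisets $$spec(G_1)=\{\pm\lambda_1,\dots,\pm\lambda_{k_1},\underbrace{0,\dots,0}_{\nu_1-2k_1}\},\qquad spec(G_2)=\{\pm\mu_1,\dots,\pm\mu_{k_2},\underbrace{0,\dots,0}_{\nu_2-2k_2}\},$$ where $k_1$ (resp. $k_2$) is the number of positive eigenvalues of $G_1$ (resp. $G_2$), $\sqrt{q_1q_2}=\lambda_1\ge\lambda_2\ge\dots\ge\lambda_{k_1}>0$ and $\sqrt{q_3q_4}=\mu_1\ge\mu_2\ge\dots\ge\mu_{k_2}>0$. Let $G=G_1\vee G_2$ and let $\theta_1,\theta_2,\theta_3,\theta_4$ be the zeros of $$f(\lambda)=\lambda^4-(q_1q_2+q_3q_4+\nu_1\nu_2)\lambda^2-2(\nu_1\epsilon_2+\nu_2\epsilon_1)\lambda+q_1q_2q_3q_4-4\epsilon_1\epsilon_2.$$ Then, as multisets, $$spec(G)=\{\theta_1,\theta_2,\theta_3,\theta_4,\pm\lambda_2,\dots,\pm\lambda_{k_1},\pm\mu_2,\dots,\pm\mu_{k_2},\underbrace{0,\d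ots,0}_{\nu_1-2k_1+\nu_2-2k_2}\}.$$
   Context: A bipartite graph with bipartition $(V_1,V_2)$ is $(q_1,q_2)$-semi-regular if every vertex of $V_1$ has degree $q_1$ and every vertex of $V_2$ has degree $q_2$ (here $q_1,q_2\ge 1$). The join $G_1\vee G_2$ has vertex set $V(G_1)\cup V(G_2)$ (disjoint) and edge set $E(G_1)\cup E(G_2)\cup\{uv: u\in V(G_1), v\in V(G_2)\}$. The spectrum $spec(G)$ of a graph is the multiset of eigenvalues of its adjacency matrix. It is a known fact that the spectrum of a $(q_1,q_2)$-semi-regular bipartite graph is symmetric about $0$ with largest eigenvalue $\sqrt{q_1q_2}$, so the displayed forms of $spec(G_1)$, $spec(G_2)$ are notation. *)

(* Defs.v *)
From mathcomp Require Import all_boot all_order all_algebra.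
Set Implicit Arguments. Unset Strict Implicit. Unset Printing Implicit Defensive.
Import Order.TTheory GRing.Theory Num.Theory.
Local Open Scope ring_scope.

Definition simple_graph (T : finType) (e : rel T) : Prop :=
  symmetric e /\ irreflexive e.

Definition semi_regular_bipartite (T : finType) (e : rel T) (A : {set T})
    (q1 q2 : nat) : Prop :=
  [/\ simple_graph e,
      forall x y, e x y -> (x \in A) != (y \in A),
      forall x, x \in A -> #|[set y | e x y]| = q1
    & forall x, x \notin A -> #|[set y | e x y]| = q2].

Definition join_rel (T1 T2 : finType) (e1 : rel T1) (e2 : rel T2) : rel (T1 + T2) :=
  fun u v => match u, v with
             | inl x, inl y => e1 x y
             | inr x, inr y => e2 x y
             | _, _ => true
             end.

Definition adjmx (R : nzRingType) (T : finType) (e : rel T) : 'M[R]_#|T| :=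
  \matrix_(i, j) (e (enum_val i) (enum_val j))%:R.

(* spec(A) = s as multisets: s is the multiset of eigenvalues of A (roots of
   the characteristic polynomial counted with multiplicity). *)
Definition spec_is (R : comNzRingType) (n : nat) (A : 'M[R]_n) (s : seq R) : Prop :=
  char_poly A = \prod_(x <- s) ('X - x%:P).

Definition pm_seq (R : zmodType) (s : seq R) : seq R :=
  flatten [seq [:: x; - x] | x <- s].

(* Main.v *)
Require Import Defs.
From mathcomp Require Import all_boot all_order all_algebra.
From mathcomp Require Import ring.
Set Implicit Arguments. Unset Strict Implicit. Unset Printing Implicit Defensive.
Import Order.TTheory GRing.Theory Num.Theory.
Local Open Scope ring_scope.

Lemma det_schur (F : fieldType) n m (P : 'M[F]_n) (Q : 'M[F]_(n, m))
  (Rm : 'M[F]_(m, n)) (S : 'M[F]_m) : P \in unitmx ->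
  \det (block_mx P Q Rm S) = \det P * \det (S - Rm *m invmx P *m Q).
Proof.
move=> uP.
have -> : block_mx P Q Rm S = block_mx 1%:M 0 (Rm *m invmx P) 1%:M *m
   block_mx P Q 0 (S - Rm *m invmx P *m Q).
  rewrite mulmx_block !mul1mx !mul0mx ?mulmx0 !addr0 ?add0r mulmxKV //.
  by rewrite addrC subrK.
by rewrite det_mulmx det_lblock det_ublock !det1 !mul1r.
Qed.

Lemma det_rank1 (F : fieldType) n (a : 'cV[F]_n) (b : 'rV[F]_n) :
  \det (1%:M - a *m b) = 1 - (b *m a) 0 0.
Proof.
pose M := block_mx (1%:M : 'M[F]_1) b a 1%:M.
have h1 : M = block_mx 1%:M 0 a 1%:M *m block_mx 1%:M b 0 (1%:M - a *m b).
  rewrite mulmx_block !mul1mx !mul0mx !mulmx1 !addr0 ?add0r.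
  by rewrite addrC subrK.
have h2 : M = block_mx 1%:M b 0 1%:M *m block_mx (1%:M - b *m a) 0 a 1%:M.
  rewrite mulmx_block !mul1mx !mul0mx !mulmx1 ?mulmx0 ?addr0 ?add0r.
  by rewrite subrK.
have := congr1 determinant h2; rewrite h1 !det_mulmx det_lblock det_ublock.
rewrite det_ublock det_lblock !det1 !mul1r !mulr1 => ->.
by rewrite det_mx11 !mxE eqxx.
Qed.

Lemma const_mx_factor (F : fieldType) n m :
  (const_mx 1 : 'M[F]_(n, m)) = (const_mx 1 : 'cV_n) *m (const_mx 1 : 'rV_m).
Proof.
apply/matrixP=> i j; rewrite !mxE big_ord1 !mxE mulr1 //.
Qed.

Definition sval_mx (F : fieldType) n (P : 'M[F]_n) : F :=
  ((const_mx 1 : 'rV_n) *m invmx P *m (const_mx 1 : 'cV_n)) 0 0.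

Lemma det_join (F : fieldType) n m (P : 'M[F]_n) (S : 'M[F]_m) :
  P \in unitmx -> S \in unitmx ->
  \det (block_mx P (- const_mx 1) (- const_mx 1) S) =
  \det P * \det S * (1 - sval_mx P * sval_mx S).
Proof.
move=> uP uS; rewrite det_schur // mulNmx mulmxN opprK.
set un := (const_mx 1 : 'cV[F]_n); set um := (const_mx 1 : 'cV[F]_m).
set vn := (const_mx 1 : 'rV[F]_n); set vm := (const_mx 1 : 'rV[F]_m).
have -> : (const_mx 1 : 'M[F]_(m, n)) = um *m vn by rewrite const_mx_factor.
have -> : (const_mx 1 : 'M[F]_(n, m)) = un *m vm by rewrite const_mx_factor.
rewrite ?mulNmx ?mulmxN ?opprK. have -> : um *m vn *m invmx P *m (un *m vm) = um *m (sval_mx P)%:M *m vm.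
  by rewrite /sval_mx -(mx11_scalar (vn *m invmx P *m un)) !mulmxA.
rewrite mul_mx_scalar -scalemxAl.
have -> : S - sval_mx P *: (um *m vm)
   = S *m (1%:M - (sval_mx P *: (invmx S *m um)) *m vm).
  by rewrite mulmxBr mulmx1 -scalemxAl -scalemxAr mulmxA mulKVmx.
rewrite det_mulmx det_rank1 -scalemxAr mxE mulrA. by rewrite /sval_mx mulmxA.
Qed.
Definition ind (R : nzRingType) (T : finType) (W : {set T}) : 'cV[R]_#|T| :=
  \col_i ((enum_val i \in W)%:R).

Lemma sum_ev (R : nzRingType) (T : finType) (F : T -> R) :
  \sum_(i < #|T|) F (enum_val i) = \sum_(y : T) F y.
Proof. by rewrite (big_enum_val F). Qed.

Lemma sum_bool (R : nzRingType) (T : finType) (P : pred T) :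
  \sum_(y : T) ((P y)%:R : R) = (#|[set y | P y]|)%:R.
Proof.
rewrite (eq_bigr (fun y => if P y then 1 else 0)); last by move=> y _; case: (P y).
rewrite -big_mkcond /= sumr_const; congr (_ *+ _).
by apply: eq_card => y; rewrite inE.
Qed.

Lemma adj_ind (R : nzRingType) (T : finType) (e : rel T) (W : {set T}) i :
  (adjmx R e *m ind R W) i 0 = (#|[set y | e (enum_val i) y && (y \in W)]|)%:R.
Proof.
rewrite !mxE -sum_bool -sum_ev; apply: eq_bigr => j _.
by rewrite !mxE -natrM; case: (e _ _); case: (_ \in W).
Qed.

Section SR.
Variables (R : numFieldType) (T : finType) (e : rel T) (V : {set T}) (q1 q2 : nat).
Hypothesis sr : semi_regular_bipartite e V q1 q2.

Lemma adj_indV : adjmx R e *m ind R V = q2%:R *: ind R (~: V).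
Proof.
case: sr => _ bip d1 d2.
apply/matrixP=> i j; rewrite (ord1 j) adj_ind !mxE inE.
case: (boolP (enum_val i \in V)) => hx /=.
  rewrite mulr0 (_ : [set y | _] = set0) ?cards0 //.
  apply/setP=> y; rewrite !inE; apply/negbTE; apply/andP=> [[exy yV]].
  by move: (bip _ _ exy); rewrite hx yV.
rewrite mulr1 -(d2 _ hx); congr _%:R; apply: eq_card => y; rewrite !inE.
case exy: (e _ y) => //=; move: (bip _ _ exy); rewrite (negbTE hx).
by case: (y \in V).
Qed.

Lemma adj_indC : adjmx R e *m ind R (~: V) = q1%:R *: ind R V.
Proof.
case: sr => _ bip d1 d2.
apply/matrixP=> i j; rewrite (ord1 j) adj_ind !mxE.
case: (boolP (enum_val i \in V)) => hx /=.
  rewrite mulr1 -(d1 _ hx); congr _%:R; apply: eq_card => y; rewrite !inE.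
  case exy: (e _ y) => //=; move: (bip _ _ exy); rewrite hx.
  by case: (y \in V).
rewrite mulr0 (_ : [set y | _] = set0) ?cards0 //.
apply/setP=> y; rewrite !inE; apply/negbTE; apply/andP=> [[exy yV]].
by move: (bip _ _ exy); rewrite (negbTE hx) (negbTE yV).
Qed.

Lemma adj_sym : (adjmx R e)^T = adjmx R e.
Proof.
case: sr => [[sym _] _ _ _].
by apply/matrixP=> i j; rewrite !mxE sym.
Qed.

Lemma ind_dot (W : {set T}) : ((ind R W)^T *m ind R W) 0 0 = #|W|%:R.
Proof.
rewrite mxE; transitivity (\sum_(i < #|T|) ((enum_val i \in W)%:R : R)).
  by apply: eq_bigr => j _; rewrite !mxE -natrM mulnb andbb.
by rewrite (sum_ev (fun y => ((y \in W)%:R : R))) sum_bool; congr _%:R; apply: eq_card => y; rewrite inE.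
Qed.

Lemma one_dot (W : {set T}) : ((const_mx 1 : 'rV[R]_#|T|) *m ind R W) 0 0 = #|W|%:R.
Proof.
rewrite mxE; transitivity (\sum_(i < #|T|) ((enum_val i \in W)%:R : R)).
  by apply: eq_bigr => j _; rewrite !mxE mul1r.
by rewrite (sum_ev (fun y => ((y \in W)%:R : R))) sum_bool; congr _%:R; apply: eq_card => y; rewrite inE.
Qed.

Lemma ind_sum : ind R V + ind R (~: V) = const_mx 1.
Proof.
apply/matrixP=> i j; rewrite !mxE in_setC; case: (enum_val i \in V); rewrite /= ?addr0 ?add0r. all: by [].
Qed.

Lemma edge_count : (#|V| * q1)%:R = (#|~: V| * q2)%:R :> R.
Proof.
have h1 : ((ind R (~: V))^T *m (adjmx R e *m ind R V)) 0 0 = (#|~: V| * q2)%:R.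
  by rewrite adj_indV -scalemxAr mxE ind_dot natrM mulrC.
have h2 : ((ind R (~: V))^T *m adjmx R e *m ind R V) 0 0 = (#|V| * q1)%:R.
  by rewrite -{1}adj_sym -trmx_mul adj_indC linearZ /= -scalemxAl mxE ind_dot natrM mulrC.
by rewrite -h2 -mulmxA h1.
Qed.

Lemma sval_adj (x : R) : x ^+ 2 != (q1 * q2)%:R ->
  (x%:M - adjmx R e) \in unitmx ->
  sval_mx (x%:M - adjmx R e) =
  ((#|V| + #|~: V|)%:R * x + 2 * (#|V| * q1)%:R) / (x ^+ 2 - (q1 * q2)%:R).
Proof.
move=> hd uP.
have hd' : x ^+ 2 - (q1 * q2)%:R != 0 by rewrite subr_eq0.
set d := x ^+ 2 - (q1 * q2)%:R in hd' *.
pose a := (x + q1%:R) / d; pose b := (x + q2%:R) / d.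
pose v := a *: ind R V + b *: ind R (~: V).
have Pv : (x%:M - adjmx R e) *m v = const_mx 1.
  rewrite mulmxBl mul_scalar_mx mulmxDr -!scalemxAr adj_indV adj_indC.
  rewrite -ind_sum; apply/matrixP=> i j; rewrite !mxE.
  rewrite /a /b /d natrM in hd' *; field.
  done.
have iv : invmx (x%:M - adjmx R e) *m const_mx 1 = v by rewrite -Pv mulKmx.
have e0 : forall (M N : 'M[R]_(1,1)), (M + N) 0 0 = M 0 0 + N 0 0 by move=> M N; rewrite mxE.
have e1 : forall c (M : 'M[R]_(1,1)), (c *: M) 0 0 = c * M 0 0 by move=> c M; rewrite mxE.
rewrite /sval_mx -mulmxA iv mulmxDr -!scalemxAr e0 !e1 !one_dot.
have ec := edge_count.
rewrite /a /b /d !natrM natrD in hd' ec *.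
apply/eqP; rewrite -subr_eq0; apply/eqP.
transitivity ((#|~: V|%:R * q2%:R - #|V|%:R * q1%:R) / (x ^+ 2 - q1%:R * q2%:R)); last first.
  by rewrite ec subrr mul0r.
field. done.
Qed.

End SR.
Lemma ev_inl (T1 T2 : finType) (k : 'I_#|T1|) :
  enum_val (cast_ord (esym (card_sum T1 T2)) (lshift #|T2| k)) = inl (enum_val k).
Proof.
rewrite (enum_val_nth (inl (enum_val k))) enumT unlock /= /sum_enum nth_cat.
rewrite size_map -enumT -cardT /= ltn_ord (nth_map (enum_val k)) -?cardT ?ltn_ord //.
by rewrite -enum_val_nth.
Qed.

Lemma ev_inr (T1 T2 : finType) (k : 'I_#|T2|) :
  enum_val (cast_ord (esym (card_sum T1 T2)) (rshift #|T1| k)) = inr (enum_val k).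
Proof.
rewrite (enum_val_nth (inr (enum_val k))) enumT unlock /= /sum_enum nth_cat.
rewrite size_map -enumT -cardT /= ltnNge leq_addr /= addKn.
rewrite (nth_map (enum_val k)) -enumT ?cardT -?cardT ?ltn_ord //.
by rewrite -enum_val_nth.
Qed.

Lemma char_poly_cast (R : nzRingType) n m (h : n = m) (A : 'M[R]_n) :
  char_poly (castmx (h, h) A) = char_poly A.
Proof. by case: m / h; rewrite castmx_id. Qed.

Lemma char_poly_ev (R : fieldType) n (A : 'M[R]_n) x :
  (char_poly A).[x] = \det (x%:M - A).
Proof.
rewrite -horner_evalE -det_map_mx; congr (\det _).
apply/matrixP=> i j; rewrite !mxE /= !horner_evalE hornerD hornerN hornerMn hornerX hornerC. done.
Qed.

Lemma join_block (R : nzRingType) (T1 T2 : finType) (e1 : rel T1) (e2 : rel T2) :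
  castmx (card_sum T1 T2, card_sum T1 T2) (adjmx R (join_rel e1 e2)) =
  block_mx (adjmx R e1) (const_mx 1) (const_mx 1) (adjmx R e2).
Proof.
apply/matrixP=> i j; rewrite castmxE /=.
rewrite -(splitK i) -(splitK j).
case: (split i) => a; case: (split j) => b; rewrite /=.
- by rewrite block_mxEul !mxE !ev_inl.
- by rewrite block_mxEur !mxE ev_inl ev_inr.
- by rewrite block_mxEdl !mxE ev_inl ev_inr.
- by rewrite block_mxEdr !mxE !ev_inr.
Qed.

Lemma poly_ev_eq (R : numFieldType) (p q g : {poly R}) :
  g != 0 -> (forall x, g.[x] != 0 -> p.[x] = q.[x]) -> p = q.
Proof.
move=> g0 H; set h := (p - q) * g.
have hr : forall x, h.[x] = 0.
  move=> x; rewrite /h hornerM hornerD hornerN.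
  case: (eqVneq g.[x] 0) => [->|gx]; first by rewrite mulr0.
  by rewrite (H _ gx) subrr mul0r.
have h0 : h = 0.
  apply/eqP; apply/negPn/negP => hn.
  pose rs := [seq (i%:R : R) | i <- iota 0 (size h)].
  have ha : all (root h) rs by apply/allP => y /mapP [i _ ->]; rewrite /root hr.
  have hu : uniq rs.
    rewrite map_inj_uniq ?iota_uniq // => i j hij; apply/eqP; by rewrite -(eqr_nat R) hij.
  have := max_poly_roots hn ha hu.
  by rewrite size_map size_iota ltnn.
apply/eqP; rewrite -subr_eq0; move/eqP: h0; rewrite /h mulf_eq0 (negbTE g0) orbF.
by [].
Qed.

Lemma pm_split (R : numClosedFieldType) (l : R) (lam : seq R) z (c : nat) :
  l = sqrtC c%:R ->
  \prod_(x <- pm_seq (l :: lam) ++ nseq z 0) ('X - x%:P) =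
  ('X^2 - (c%:R)%:P) * \prod_(x <- pm_seq lam ++ nseq z 0) ('X - x%:P).
Proof.
move=> hl; rewrite /pm_seq /= -/(pm_seq lam) !big_cons mulrA; congr (_ * _).
have -> : (c%:R : R) = l * l by rewrite -expr2 hl sqrtCK.
by rewrite polyCM polyCN; ring.
Qed.

Lemma key_eq (R : numClosedFieldType)
    (T1 : finType) (e1 : rel T1) (V1 : {set T1}) (q1 q2 : nat)
    (T2 : finType) (e2 : rel T2) (V3 : {set T2}) (q3 q4 : nat) :
  semi_regular_bipartite e1 V1 q1 q2 ->
  semi_regular_bipartite e2 V3 q3 q4 ->
  let nu1 := (#|V1| + #|~: V1|)%N in let eps1 := (#|V1| * q1)%N in
  let nu2 := (#|V3| + #|~: V3|)%N in let eps2 := (#|V3| * q3)%N in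
  char_poly (adjmx R (join_rel e1 e2)) *
    (('X^2 - ((q1 * q2)%:R)%:P) * ('X^2 - ((q3 * q4)%:R)%:P)) =
  char_poly (adjmx R e1) * char_poly (adjmx R e2) *
  ('X^4 - ((q1 * q2 + q3 * q4 + nu1 * nu2)%N)%:R *: 'X^2
       - ((2 * (nu1 * eps2 + nu2 * eps1))%N)%:R *: 'X
       + ((q1 * q2 * q3 * q4)%N)%:R%:P - ((4 * eps1 * eps2)%N)%:R%:P).
Proof.
move=> sr1 sr2 nu1 eps1 nu2 eps2.
set d1 := 'X^2 - _; set d2 := 'X^2 - _.
have md1 : d1 \is monic by rewrite monicXnsubC.
have md2 : d2 \is monic by rewrite monicXnsubC.
apply: (@poly_ev_eq _ _ _ (char_poly (adjmx R e1) * char_poly (adjmx R e2) * (d1 * d2))).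
  by rewrite !mulf_neq0 ?monic_neq0 ?char_poly_monic.
move=> x; rewrite !hornerM !mulf_eq0 !negb_or => /and3P [/andP [hA hB] h1 h2].
rewrite -(char_poly_cast (card_sum T1 T2) (adjmx R (join_rel e1 e2))) join_block.
rewrite !char_poly_ev in hA hB *.
rewrite scalar_mx_block opp_block_mx add_block_mx !add0r det_join; last 2 first.
- by rewrite unitmxE unitfE.
- by rewrite unitmxE unitfE.
have h1' : x ^+ 2 != (q1 * q2)%:R by move: h1; rewrite /d1 !hornerE subr_eq0.
have h2' : x ^+ 2 != (q3 * q4)%:R by move: h2; rewrite /d2 !hornerE subr_eq0.
rewrite (sval_adj sr1 h1') ?unitmxE ?unitfE // (sval_adj sr2 h2') ?unitmxE ?unitfE //.
rewrite /d1 /d2 /nu1 /nu2 /eps1 /eps2 !hornerE.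
rewrite !natrM !natrD !natrM in h1' h2' *.
have h1'' : x ^+ 2 - q1%:R * q2%:R != 0 by rewrite subr_eq0.
have h2'' : x ^+ 2 - q3%:R * q4%:R != 0 by rewrite subr_eq0.
rewrite /= ?natrD. field. by rewrite h1'' h2''.
Qed.
Theorem theorem3p1 (R : numClosedFieldType)
    (T1 : finType) (e1 : rel T1) (V1 : {set T1}) (q1 q2 : nat)
    (T2 : finType) (e2 : rel T2) (V3 : {set T2}) (q3 q4 : nat)
    (lam mu : seq R) (theta : seq R) :
  (1 <= q1)%N -> (1 <= q2)%N -> (1 <= q3)%N -> (1 <= q4)%N ->
  semi_regular_bipartite e1 V1 q1 q2 ->
  semi_regular_bipartite e2 V3 q3 q4 ->
  (#|V1| <= #|~: V1|)%N ->
  (#|V3| <= #|~: V3|)%N ->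
  let n1 := #|V1| in let n2 := #|~: V1| in
  let n3 := #|V3| in let n4 := #|~: V3| in
  let nu1 := (n1 + n2)%N in let eps1 := (n1 * q1)%N in
  let nu2 := (n3 + n4)%N in let eps2 := (n3 * q3)%N in
  let k1 := size lam in let k2 := size mu in
  (* spec(G1) = {±λ_1,...,±λ_k1, 0^(ν1-2k1)}, λ_1 = √(q1q2) ≥ ... ≥ λ_k1 > 0 *)
  (0 < k1)%N -> sorted (fun x y => y <= x) lam -> all (fun x => 0 < x) lam ->
  lam`_0 = sqrtC (q1 * q2)%:R ->
  (2 * k1 <= nu1)%N ->
  spec_is (adjmx R e1) (pm_seq lam ++ nseq (nu1 - 2 * k1) 0) ->
  (* spec(G2) = {±μ_1,...,±μ_k2, 0^(ν2-2k2)}, μ_1 = √(q3q4) ≥ ... ≥ μ_k2 > 0 *)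
  (0 < k2)%N -> sorted (fun x y => y <= x) mu -> all (fun x => 0 < x) mu ->
  mu`_0 = sqrtC (q3 * q4)%:R ->
  (2 * k2 <= nu2)%N ->
  spec_is (adjmx R e2) (pm_seq mu ++ nseq (nu2 - 2 * k2) 0) ->
  (* θ_1,...,θ_4 are the zeros (with multiplicity) of f *)
  size theta = 4%N ->
  'X^4 - ((q1 * q2 + q3 * q4 + nu1 * nu2)%N)%:R *: 'X^2
       - ((2 * (nu1 * eps2 + nu2 * eps1))%N)%:R *: 'X
       + ((q1 * q2 * q3 * q4)%N)%:R%:P - ((4 * eps1 * eps2)%N)%:R%:P
    = \prod_(t <- theta) ('X - t%:P) :> {poly R} ->
  spec_is (adjmx R (join_rel e1 e2))
    (theta ++ pm_seq (behead lam) ++ pm_seq (behead mu)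
           ++ nseq ((nu1 - 2 * k1) + (nu2 - 2 * k2)) 0).
Proof.
move=> hq1 hq2 hq3 hq4 sr1 sr2 _ _; cbv zeta.
move=> k1p _ _ l0 _ sA k2p _ _ m0 _ sB _ hf.
have key := key_eq R sr1 sr2; cbv zeta in key.
rewrite hf in key.
move: k1p sA l0; case: lam => [|l lam'] // _ sA l0.
move: k2p sB m0; case: mu => [|m mu'] // _ sB m0.
rewrite /= in l0 m0.
change (behead (l :: lam')) with lam'; change (behead (m :: mu')) with mu'.
rewrite /spec_is in sA sB *.
rewrite (pm_split _ _ l0) in sA; rewrite (pm_split _ _ m0) in sB.
rewrite sA sB in key.
set z1 := (_ - 2 * size (l :: lam'))%N in key *.
set z2 := (_ - 2 * size (m :: mu'))%N in key *.
set d1 := 'X^2 - _ in key; set d2 := 'X^2 - _ in key.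
have dd : d1 * d2 != 0.
  by rewrite mulf_neq0 // monic_neq0 // monicXnsubC.
apply: (mulIf dd); rewrite /= key nseqD !big_cat /=.
ring.
Qed.
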